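(* Let $d\ge 6$, $c\in[d]$, and let $\mathcal{F}\subseteq 2^{[n]}$ be a hereditary family with $\delta(\mathcal{F})\ge 2^{d-1}-c+1$. Then every bad vertex $x$ is contained in exactly one pile, namely $N(x)$. In particular, every vertex of $[n]$ that is not contained in any pile is good.
   Context: A family $\mathcal{F}\subseteq 2^{[n]}$ is hereditary if $F'\subseteq F\in\mathcal{F}$ implies $F'\in\mathcal{F}$. $d_{\mathcal{F}}(x)=|\{F\in\mathcal{F}:x\in F\}|$, $\delta(\mathcal{F})=\min_x d_{\mathcal{F}}(x)$, $N(x)=\bigcup_{x\in F\in\mathcal{F}}F$. Under the hypothesis $\delta(\mathcal{F})\ge 2^{d-1}-c+1$ every vertex has $|N(x)|\ge d$; a vertex $x$ is good if $|N(x)|\ge d+1$ and bad if $|N(x)|=d$. A set $P\subseteq[n]$ with $|P|=d$ is a pile of $\mathcal{F}$ if $P\subseteq N(y)$ for every $y\in P$, and there exists $z\in P$ with $N(z)=P$. *)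

(* Defs.v *)
From mathcomp Require Import all_boot.
Set Implicit Arguments. Unset Strict Implicit. Unset Printing Implicit Defensive.

Definition hereditary (n : nat) (F : {set {set 'I_n}}) : Prop :=
  forall A B : {set 'I_n}, A \subset B -> B \in F -> A \in F.

Definition deg (n : nat) (F : {set {set 'I_n}}) (x : 'I_n) : nat :=
  #|[set A in F | x \in A]|.

Definition nbhd (n : nat) (F : {set {set 'I_n}}) (x : 'I_n) : {set 'I_n} :=
  \bigcup_(A in F | x \in A) A.

Definition min_deg_ge (n : nat) (F : {set {set 'I_n}}) (k : nat) : Prop :=
  forall x : 'I_n, k <= deg F x.

Definition good (n d : nat) (F : {set {set 'I_n}}) (x : 'I_n) : Prop :=
  d.+1 <= #|nbhd F x|.

Definition bad (n d : nat) (F : {set {set 'I_n}}) (x : 'I_n) : Prop :=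
  #|nbhd F x| = d.

Definition pile (n d : nat) (F : {set {set 'I_n}}) (P : {set 'I_n}) : Prop :=
  [/\ #|P| = d,
      (forall y, y \in P -> P \subset nbhd F y) &
      exists2 z, z \in P & nbhd F z = P].

(* Main.v *)
Require Import Defs.
From mathcomp Require Import all_boot zify.
Set Implicit Arguments. Unset Strict Implicit.
Lemma card_supsets (T:finType) (N S : {set T}) : S \subset N ->
  #|[set A in powerset N | S \subset A]| = 2 ^ (#|N| - #|S|).
Proof.
move=> sSN.
have -> : [set A in powerset N | S \subset A] = [set B :|: S | B in powerset (N :\: S)].
  apply/setP=> A; rewrite !inE; apply/andP/imsetP.
  - case=> AN SA; exists (A :\: S); first by rewrite inE; apply: setSD.
    apply/setP=> z; rewrite !inE; case: (boolP (z \in S)) => zS /=.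
      by rewrite (subsetP SA).
    by rewrite orbF.
  - case=> B; rewrite inE => BNS ->; rewrite subUset sSN subsetUr andbT.
    by rewrite (subset_trans BNS (subsetDl _ _)).
rewrite card_in_imset ?card_powerset ?cardsD ?(setIidPr sSN) //.
move=> B1 B2; rewrite !inE => h1 h2 e; apply/setP=> z.
have /setP/(_ z) := e; rewrite !inE.
case: (boolP (z \in S)) => zS; last by rewrite !orbF.
have n1 : z \notin B1 by apply/negP=> /(subsetP h1); rewrite inE zS.
have n2 : z \notin B2 by apply/negP=> /(subsetP h2); rewrite inE zS.
by rewrite (negbTE n1) (negbTE n2).
Qed.

Lemma pow_ge d : 6 <= d -> d <= 2 ^ (d - 3).
Proof.
elim: d => // d IH; rewrite leq_eqVlt => /orP [/eqP <- //|h].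
have := IH h; rewrite subSn; last by lia.
rewrite expnS; have : 1 <= 2 ^ (d - 3) by rewrite expn_gt0. lia.
Qed.

Lemma sub_nb n (F : {set {set 'I_n}}) x A : A \in F -> x \in A -> A \subset nbhd F x.
Proof. by move=> AF xA; rewrite /nbhd (bigcup_sup A) // AF xA. Qed.

Lemma nb_sub n (F : {set {set 'I_n}}) x :
  [set A in F | x \in A] \subset [set A in powerset (nbhd F x) | [set x] \subset A].
Proof.
apply/subsetP=> A; rewrite !inE => /andP [AF xA].
by rewrite sub1set xA andbT; apply: sub_nb.
Qed.

Lemma deg_le n (F : {set {set 'I_n}}) x : x \in nbhd F x ->
  deg F x <= 2 ^ (#|nbhd F x| - 1).
Proof.
move=> xN; have e := @card_supsets _ (nbhd F x) [set x]; rewrite cards1 in e.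
rewrite /deg -e ?sub1set //; apply: subset_leq_card; exact: nb_sub.
Qed.

Lemma x_in n d c (F : {set {set 'I_n}}) x :
  min_deg_ge F (2 ^ d.-1 - c + 1) -> x \in nbhd F x.
Proof.
move=> md; have : 0 < deg F x by apply: leq_trans (md x); rewrite addn1.
rewrite /deg card_gt0 => /set0Pn [A]; rewrite inE => /andP [AF xA].
exact: (subsetP (sub_nb AF xA)).
Qed.

Lemma N_ge n d c (F : {set {set 'I_n}}) x :
  6 <= d -> 1 <= c <= d -> min_deg_ge F (2 ^ d.-1 - c + 1) -> d <= #|nbhd F x|.
Proof.
move=> d6 cd md; have xN := x_in x md.
have h := leq_trans (md x) (deg_le xN).
rewrite leqNgt; apply/negP => lt.
have e : 2 ^ (#|nbhd F x| - 1) <= 2 ^ (d - 2) by rewrite leq_exp2l //; lia.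
have p := pow_ge d6.
have e2 : 2 ^ (d - 2) = 2 * 2 ^ (d - 3) by rewrite -expnS; congr (2 ^ _); lia.
have e3 : 2 ^ d.-1 = 2 * 2 ^ (d - 2) by rewrite -expnS; congr (2 ^ _); lia.
lia.
Qed.

Lemma three n d c (F : {set {set 'I_n}}) x y w :
  6 <= d -> 1 <= c <= d -> min_deg_ge F (2 ^ d.-1 - c + 1) ->
  #|nbhd F x| = d -> y \in nbhd F x -> w \in nbhd F x ->
  exists2 A, A \in F & [&& x \in A, y \in A & w \in A].
Proof.
move=> d6 cd md bd yN wN; have xN := x_in x md.
case: (boolP [exists A in F, [&& x \in A, y \in A & w \in A]]) => [/exists_inP//|H].
set N := nbhd F x.
set G := [set A in F | x \in A].
set K := [set A in powerset N | [set x; y; w] \subset A].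
set Hs := [set A in powerset N | [set x] \subset A].
have GH : G \subset Hs by exact: nb_sub.
have KH : K \subset Hs.
  apply/subsetP=> A; rewrite !inE => /andP [-> /subsetP s] /=.
  by rewrite sub1set; apply: s; rewrite !inE eqxx.
have dis : [disjoint G & K].
  rewrite -setI_eq0; apply/eqP/setP=> A; rewrite !inE.
  apply/negP => /andP [/andP [AF xA] /andP [_ /subsetP s]].
  apply: (negP H); apply/exists_inP; exists A => //.
  by rewrite !s // !inE eqxx ?orbT.
have c1 : #|G| + #|K| <= #|Hs|.
  have u := cardsU G K.
  have : #|G :|: K| <= #|Hs| by apply: subset_leq_card; rewrite subUset GH KH.
  have i0 : G :&: K = set0 by apply/eqP; rewrite setI_eq0.
  rewrite i0 cards0 in u; by rewrite subn0 in u; rewrite -u.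
have s3 : [set x; y; w] \subset N by rewrite !subUset !sub1set xN yN wN.
rewrite /Hs /K !card_supsets ?sub1set // cards1 in c1.
have k3 : #|[set x; y; w]| <= 3.
  rewrite !cardsU !cards1; lia.
have e1 : 2 ^ (d - 3) <= 2 ^ (#|N| - #|[set x; y; w]|) by rewrite leq_exp2l // bd; lia.
have p := pow_ge d6.
have e3 : 2 ^ d.-1 = 2 ^ (#|N| - 1) by rewrite bd; congr (2 ^ _); lia.
have := md x; rewrite /deg -/G => hh; have c2 : #|G| + 2 ^ (d - 3) <= 2 ^ d.-1 by rewrite e3; apply: leq_trans c1; rewrite leq_add2l. exfalso; lia.
Qed.

Theorem mainTheorem13 (n d c : nat) (F : {set {set 'I_n}}) :
  6 <= d -> 1 <= c <= d ->
  hereditary F ->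
  min_deg_ge F (2 ^ d.-1 - c + 1) ->
  (forall x : 'I_n, bad d F x ->
     [/\ pile d F (nbhd F x), x \in nbhd F x &
         forall P : {set 'I_n}, pile d F P -> x \in P -> P = nbhd F x])
  /\
  (forall x : 'I_n, (forall P : {set 'I_n}, pile d F P -> x \notin P) ->
     good d F x).
Proof.
move=> d6 cd _ md.
have B : forall x : 'I_n, bad d F x ->
     [/\ pile d F (nbhd F x), x \in nbhd F x &
         forall P : {set 'I_n}, pile d F P -> x \in P -> P = nbhd F x].
  move=> x bx; have xN := x_in x md; split => //.
  - split => //; last by exists x.
    move=> y yN; apply/subsetP=> w wN.
    have [A AF /and3P [_ yA wA]] := three d6 cd md bx yN wN.
    exact: (subsetP (sub_nb AF yA)).
  - move=> P [cP sP _] xP; apply/eqP; rewrite eqEcard (sP x xP) cP.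
    by rewrite /bad in bx; rewrite bx leqnn.
split => // x nP; rewrite /good.
have := N_ge x d6 cd md; rewrite leq_eqVlt => /orP [/eqP e|//].
have [p xN _] := B x (esym e).
by have := nP _ p; rewrite xN.
Qed.
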